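(* There exists $\theta\in(0,1/\sqrt3)$ such that for every $\eta>0$, every $\rho>0$ and every $\theta$-bad plane $L$ for $Q_\rho$ (with unit normal $\nu=(\nu_1,\nu_2,\nu_3)$) the following holds: there is exactly one index $k\in\{1,2,3\}$ with $|\nu_k|\ge\theta$, and $$\text{either}\quad -\tfrac{3\rho}{4}<x\cdot e_k<-\tfrac{\rho}{4}\ \ \forall x\in L\cap Q_{3\rho},\qquad\text{or}\quad \tfrac{\rho}{4}<x\cdot e_k<\tfrac{3\rho}{4}\ \ \forall x\in L\cap Q_{3\rho}.$$
   Context: Here $Q_\rho=\rho[-\frac12,\frac12)^3\subset\mathbb R^3$ is centered at the origin and $Q_{3\rho}=3\rho[-\frac12,\frac12)^3$. For $A\subset\mathbb R^3$ and $s>0$, $(A)_s:=\{x:\mathrm{dist}(x,A)<s\}$. Given $\theta\in(0,1/\sqrt3)$ and $\eta>0$, a plane $L\subset\mathbb R^3$ with unit normal $\nu=(\nu_1,\nu_2,\nu_3)$ and $(L)_{3\eta\rho}\cap Q_\rho\ne\emptyset$ is called $\theta$-good for $Q_\rho$ if either (1) there are $i\ne j$ in $\{1,2,3\}$ with $|\nu_i|,|\nu_j|\ge\theta$, or (2) there is $k$ with $|\nu_k|\ge\theta$ and $\mathrm{dist}\big(L\cap Q_{3\rho},\{x_k=-\rho/2\}\cup\{x_k=\rho/2\}\big)\ge20\theta\rho$. Such a plane which is not $\theta$-good is called $\theta$-bad for $Q_\rho$. $e_k$ is the $k$-th standard basis vector. *)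

(* Defs.v *)
From HB Require Import structures.
From mathcomp Require Import all_boot all_order all_algebra.
From mathcomp Require Import reals.
Set Implicit Arguments. Unset Strict Implicit. Unset Printing Implicit Defensive.
Import Order.TTheory GRing.Theory Num.Theory.
Local Open Scope ring_scope.

Section Defs.
Variable R : realType.
Definition pt := 'rV[R]_3.

Definition dot (x y : pt) : R := \sum_(i < 3) x 0 i * y 0 i.
Definition enorm (x : pt) : R := Num.sqrt (dot x x).

Definition inQ (s : R) (x : pt) : Prop :=
  forall i : 'I_3, - (s / 2) <= x 0 i /\ x 0 i < s / 2.

Definition nbhd (A : pt -> Prop) (s : R) (x : pt) : Prop :=
  exists a, A a /\ enorm (x - a) < s.

Definition setdist_ge (A B : pt -> Prop) (d : R) : Prop :=
  forall a b, A a -> B b -> d <= enorm (a - b).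

Definition plane (nu : pt) (c : R) (x : pt) : Prop := dot x nu = c.

Definition faces (k : 'I_3) (rho : R) (x : pt) : Prop :=
  x 0 k = - (rho / 2) \/ x 0 k = rho / 2.

Definition meets_nbhd (eta rho : R) (nu : pt) (c : R) : Prop :=
  exists x, inQ rho x /\ nbhd (plane nu c) (3 * eta * rho) x.

Definition good_cond (theta rho : R) (nu : pt) (c : R) : Prop :=
  (exists i j : 'I_3, i != j /\ theta <= `|nu 0 i| /\ theta <= `|nu 0 j|)
  \/ (exists k : 'I_3, theta <= `|nu 0 k| /\
        setdist_ge (fun x => plane nu c x /\ inQ (3 * rho) x) (faces k rho)
                   (20 * theta * rho)).

Definition theta_good (theta eta rho : R) (nu : pt) (c : R) : Prop :=
  enorm nu = 1 /\ meets_nbhd eta rho nu c /\ good_cond theta rho nu c.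

Definition theta_bad (theta eta rho : R) (nu : pt) (c : R) : Prop :=
  enorm nu = 1 /\ meets_nbhd eta rho nu c /\ ~ good_cond theta rho nu c.
End Defs.

(* Main.v *)
Require Import Defs.
From HB Require Import structures.
From mathcomp Require Import all_boot all_order all_algebra.
From mathcomp Require Import reals.
From mathcomp Require Import lra.
From Stdlib Require Import Classical.
Import Order.TTheory GRing.Theory Num.Theory.
Local Open Scope ring_scope.
Set Implicit Arguments.

Section S.
Variable R : realType.
Definition i0 : 'I_3 := @Ordinal 3 0 isT.
Definition i1 : 'I_3 := @Ordinal 3 1 isT.
Definition i2 : 'I_3 := @Ordinal 3 2 isT.

Lemma dotE (x y : pt R) : dot x y = x 0 i0 * y 0 i0 + x 0 i1 * y 0 i1 + x 0 i2 * y 0 i2.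
Proof.
rewrite /dot !big_ord_recr big_ord0 /= add0r.
have -> : widen_ord (leqnSn 2) (widen_ord (leqnSn 1) ord_max) = i0 by apply/val_inj.
have -> : widen_ord (leqnSn 2) ord_max = i1 by apply/val_inj.
have -> : (ord_max : 'I_3) = i2 by apply/val_inj.
by [].
Qed.

Lemma split3 (k : 'I_3) : exists i j : 'I_3, [/\ i != k, j != k, i != j &
  forall x y : pt R, dot x y = x 0 k * y 0 k + x 0 i * y 0 i + x 0 j * y 0 j].
Proof.
have [->|[->|->]] : k = i0 \/ k = i1 \/ k = i2.
  by case: k => [[|[|[|m]]] hk]; [left|right;left|right;right|]; try apply/val_inj.
- by exists i1, i2; split => // x y; rewrite dotE.
- by exists i0, i2; split => // x y; rewrite dotE; lra.
- by exists i0, i1; split => // x y; rewrite dotE; lra.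
Qed.

Lemma sqn (v : R) : `|v| ^+ 2 = v ^+ 2.
Proof. by rewrite real_normK // num_real. Qed.

Lemma dotsq (x : pt R) (k : 'I_3) : x 0 k ^+ 2 <= dot x x.
Proof.
have [i [j [_ _ _ ->]]] := split3 k.
by rewrite -!expr2; have := sqr_ge0 (x 0 i); have := sqr_ge0 (x 0 j); lra.
Qed.

Lemma dot_ge0 (x : pt R) : 0 <= dot x x.
Proof. exact: le_trans (sqr_ge0 (x 0 i0)) (dotsq x i0). Qed.

Lemma compnorm (x : pt R) (k : 'I_3) : `|x 0 k| <= enorm x.
Proof.
by rewrite /enorm -sqrtr_sqr ler_sqrt ?dot_ge0 ?dotsq.
Qed.
End S.

Theorem lemma2p21 (R : realType) :
  exists theta : R, 0 < theta /\ theta < 1 / Num.sqrt 3 /\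
    forall (eta rho : R) (nu : pt R) (c : R),
      0 < eta -> 0 < rho -> theta_bad theta eta rho nu c ->
      (exists k : 'I_3, theta <= `|nu 0 k| /\
        (forall j : 'I_3, theta <= `|nu 0 j| -> j = k) /\
        ((forall x : pt R, plane nu c x -> inQ (3 * rho) x ->
            - (3 * rho / 4) < x 0 k /\ x 0 k < - (rho / 4))
         \/
         (forall x : pt R, plane nu c x -> inQ (3 * rho) x ->
            rho / 4 < x 0 k /\ x 0 k < 3 * rho / 4))).
Proof.
exists (1/200); split; first lra.
split.
  have s3 : Num.sqrt (3 : R) < 2.
    have -> : (2 : R) = Num.sqrt 4.
      have -> : (4:R) = 2 ^+ 2 by rewrite expr2; lra.
      by rewrite sqrtr_sqr ger0_norm.
    by rewrite ltr_sqrt //; lra.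
  have s0 : 0 < Num.sqrt (3 : R) by rewrite sqrtr_gt0; lra.
  by rewrite ltr_pdivlMr //; lra.
move=> eta rho nu c he hr [hn [_ hg]].
set T : R := 1/200.
have N : dot nu nu = 1.
  by rewrite -(sqr_sqrtr (dot_ge0 nu)); rewrite /enorm in hn; rewrite hn expr1n.
have nA : forall i j : 'I_3, i != j -> T <= `|nu 0 i| -> T <= `|nu 0 j| -> False.
  by move=> i j hij hi hj; apply: hg; left; exists i, j.
have sq : forall v : R, `|v| < T -> v ^+ 2 < T ^+ 2.
  move=> v hv; have := normr_ge0 v; rewrite -sqn; nra.
have [k hk] : exists k : 'I_3, T <= `|nu 0 k|.
  case: (lerP T `|nu 0 i0|) => h0; first by exists i0.
  case: (lerP T `|nu 0 i1|) => h1; first by exists i1.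
  case: (lerP T `|nu 0 i2|) => h2; first by exists i2.
  exfalso; move: N; rewrite dotE -!expr2.
  have := sq _ h0; have := sq _ h1; have := sq _ h2; rewrite /T; lra.
exists k; split => //.
have uniq : forall j : 'I_3, T <= `|nu 0 j| -> j = k.
  move=> j hj; case: (eqVneq j k) => // hjk; exfalso; exact: nA hjk hj hk.
split => //.
have [i [j [hik hjk hij hd]]] := @split3 R k.
have lt_of : forall l : 'I_3, l != k -> `|nu 0 l| < T.
  move=> l hl; rewrite ltNge; apply/negP => h; exact: nA hl h hk.
have hi := lt_of i hik; have hj := lt_of j hjk.
have [a [b [[pa qa] [fb hab]]]] : exists a b : pt R,
   (plane nu c a /\ inQ (3 * rho) a) /\ faces k rho b /\ enorm (a - b) < 20 * T * rho.
  apply: NNPP => H; apply: hg; right; exists k; split => //.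
  move=> a b Ha Hb; rewrite leNgt; apply/negP => hlt; apply: H; exists a, b; by [].
have hak : `|a 0 k - b 0 k| < 20 * T * rho.
  by apply: le_lt_trans hab; have := compnorm (a - b) k; rewrite !mxE.
have nk : 1/2 <= `|nu 0 k|.
  move: N; rewrite hd -!expr2 => N.
  have := sq _ hi; have := sq _ hj; have := normr_ge0 (nu 0 k).
  have := @sqn R (nu 0 k); rewrite /T; nra.
have key : forall x : pt R, plane nu c x -> inQ (3 * rho) x ->
    `|x 0 k - a 0 k| <= 12 * T * rho.
  move=> x px qx.
  have e : nu 0 k * (x 0 k - a 0 k) = - (nu 0 i * (x 0 i - a 0 i) + nu 0 j * (x 0 j - a 0 j)).
    move: px pa; rewrite /plane !hd => px pa.
    by apply/eqP; rewrite -subr_eq0; apply/eqP; lra.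
  have b3 : forall l : 'I_3, `|x 0 l - a 0 l| <= 3 * rho.
    move=> l; have [q1 q2] := qx l; have [q3 q4] := qa l.
    rewrite ler_norml; apply/andP; split; lra.
  have h1 : `|nu 0 k| * `|x 0 k - a 0 k| <= 6 * T * rho.
    rewrite -normrM e normrN; apply: le_trans (ler_normD _ _) _.
    rewrite !normrM.
    have := b3 i; have := b3 j; have := normr_ge0 (x 0 i - a 0 i);
    have := normr_ge0 (x 0 j - a 0 j); have := normr_ge0 (nu 0 i);
    have := normr_ge0 (nu 0 j); rewrite /T in hi hj *; nra.
  have := normr_ge0 (x 0 k - a 0 k); nra.
case: fb => fb; [left|right] => x px qx; have := key x px qx;
  move: hak; rewrite fb !ler_norml !ltr_norml => /andP[u1 u2] /andP[u3 u4];
  rewrite /T in u1 u2 u3 u4; split; lra.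
Qed.
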